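(* Let $\alpha$ be a constant and let $(e_n)_{n\in\mathbb Z}$ be a sequence of nonzero numbers satisfying $$e_{n-1}e_{n-2}^2e_{n-5}+e_{n-1}^2e_{n-4}^2+e_ne_{n-3}^2e_{n-4}=\alpha\,e_{n-2}^2e_{n-3}^2$$ for all $n$. Put $u_n=\frac{e_ne_{n+3}}{e_{n+1}e_{n+2}}$ and $J=(u_1u_0-\alpha)(u_1+u_0)$. Then for all $n$, $$e_{n+5}e_n+\alpha\,e_{n+4}e_{n+1}+J\,e_{n+3}e_{n+2}=0.$$
   Context: The sequence $u_n$ satisfies $u_{n+1}+u_{n-1}=(\alpha-u_n^2)/u_n$, for which $(u_nu_{n-1}-\alpha)(u_n+u_{n-1})$ is a first integral, so $J$ equals this quantity for every $n$. *)

(* Defs.v *)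
From mathcomp Require Import all_boot all_order all_algebra.
Set Implicit Arguments. Unset Strict Implicit. Unset Printing Implicit Defensive.
Import GRing.Theory Num.Theory.
Local Open Scope ring_scope.

Definition useq (R : numFieldType) (e : int -> R) (n : int) : R :=
  e n * e (n + 3) / (e (n + 1) * e (n + 2)).

(* Main.v *)
Require Import Defs.
From mathcomp Require Import all_boot all_order all_algebra.
From mathcomp Require Import ring.
Import GRing.Theory Num.Theory.
Local Open Scope ring_scope.

Theorem proposition5 (R : numFieldType) (alpha : R) (e : int -> R)
  (He0 : forall n : int, e n != 0)
  (Hrec : forall n : int,
     e (n - 1) * e (n - 2) ^+ 2 * e (n - 5) + e (n - 1) ^+ 2 * e (n - 4) ^+ 2
       + e n * e (n - 3) ^+ 2 * e (n - 4)
     = alpha * e (n - 2) ^+ 2 * e (n - 3) ^+ 2) :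
  let J := (useq e 1 * useq e 0 - alpha) * (useq e 1 + useq e 0) in
  forall n : int,
    e (n + 5) * e n + alpha * e (n + 4) * e (n + 1) + J * e (n + 3) * e (n + 2) = 0.
Proof.
have H' : forall n : int, e (n+4) * e (n+3) ^+ 2 * e n + e (n+4) ^+ 2 * e (n+1) ^+ 2
   + e (n+5) * e (n+2) ^+ 2 * e (n+1) = alpha * e (n+3) ^+ 2 * e (n+2) ^+ 2.
  move=> n; have := Hrec (n + 5).
  have -> : n + 5 - 1 = n + 4 by ring.
  have -> : n + 5 - 2 = n + 3 by ring.
  have -> : n + 5 - 3 = n + 2 by ring.
  have -> : n + 5 - 4 = n + 1 by ring.
  have -> : n + 5 - 5 = n by ring.
  by [].
pose K n := (e (n+5) * e n + alpha * e (n+4) * e (n+1)) / (e (n+3) * e (n+2)).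
have step : forall n, K (n + 1) = K n.
  move=> n; rewrite /K.
  have h6 := H' (n + 1); have h5 := H' n.
  have -> : n + 1 + 5 = n + 6 by ring.
  have -> : n + 1 + 4 = n + 5 by ring.
  have -> : n + 1 + 3 = n + 4 by ring.
  have -> : n + 1 + 2 = n + 3 by ring.
  have -> : n + 1 + 1 = n + 2 by ring.
  move: h6.
  have -> : n + 1 + 5 = n + 6 by ring.
  have -> : n + 1 + 4 = n + 5 by ring.
  have -> : n + 1 + 3 = n + 4 by ring.
  have -> : n + 1 + 2 = n + 3 by ring.
  have -> : n + 1 + 1 = n + 2 by ring.
  move=> h6.
  have n2 := He0 (n+2); have n3 := He0 (n+3); have n4 := He0 (n+4);
  have n5 := He0 (n+5).
  apply/eqP; rewrite eqr_div ?mulf_neq0 //; apply/eqP.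
  apply: (mulIf n3).
  set x0 := e n in h5 h6 *; set x1 := e (n+1) in h5 h6 *;
  set x2 := e (n+2) in h5 h6 n2 *; set x3 := e (n+3) in h5 h6 n3 *;
  set x4 := e (n+4) in h5 h6 n4 *; set x5 := e (n+5) in h5 h6 n5 *;
  set x6 := e (n+6) in h5 h6 *.
  have E6 : x6 * x3 ^+ 2 * x2 = alpha * x4 ^+ 2 * x3 ^+ 2 - x5 * x4 ^+ 2 * x1 - x5 ^+ 2 * x2 ^+ 2.
    by rewrite -h6; ring.
  have E5 : x5 * x2 ^+ 2 * x1 = alpha * x3 ^+ 2 * x2 ^+ 2 - x4 * x3 ^+ 2 * x0 - x4 ^+ 2 * x1 ^+ 2.
    by rewrite -h5; ring.
  transitivity (x1 * (x6 * x3 ^+ 2 * x2) + alpha * x5 * x2 ^+ 2 * x3 ^+ 2); first ring.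
  rewrite E6.
  transitivity (x1 * (alpha * x4 ^+ 2 * x3 ^+ 2 - x5 * x4 ^+ 2 * x1) - x5 * (x5 * x2 ^+ 2 * x1)
     + alpha * x5 * x2 ^+ 2 * x3 ^+ 2); first ring.
  rewrite E5; ring.
have Kc : forall n, K n = K 0.
  have P : forall m : nat, K m%:Z = K 0.
    elim=> [//|m IH]; by rewrite -addn1 PoszD step.
  have N : forall m : nat, K (- m%:Z) = K 0.
    elim=> [//|m IH]; rewrite -IH -(step (- m.+1%:Z)).
    by congr K; rewrite -addn1 PoszD opprD addrNK.
  by case=> m; [apply: P | rewrite NegzE; apply: N].
move=> J n.
have n2 := He0 (n+2); have n3 := He0 (n+3).
have HK : K n = - J.
  rewrite Kc /K /J /useq !add0r.
  have h := H' 0; rewrite !add0r in h.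
  have n0 := He0 0; have n1 := He0 1; have m2 := He0 2; have m3 := He0 3.
  move: h n0 n1 m2 m3.
  rewrite -[e (1+1)]/(e 2) -[e (1+2)]/(e 3) -[e (1+3)]/(e 4).
  move=> h n0 n1 m2 m3.
  have E5 : e 5 = (alpha * e 3 ^+ 2 * e 2 ^+ 2 - e 4 * e 3 ^+ 2 * e 0 - e 4 ^+ 2 * e 1 ^+ 2)
                   / (e 2 ^+ 2 * e 1).
    apply: (mulIf (mulf_neq0 (expf_neq0 2 m2) n1)).
    rewrite divfK ?mulf_neq0 ?expf_neq0 // -h; ring.
  rewrite E5; field.
  by rewrite m2 n1 m3.
move: HK; rewrite /K => HK.
have HJ : J = - ((e (n + 5) * e n + alpha * e (n + 4) * e (n + 1)) / (e (n + 3) * e (n + 2))).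
  by rewrite HK opprK.
rewrite HJ; field.
by rewrite n3 n2.
Qed.
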